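(* For each $h\in\{1,2\}$, let $\mathrm{oct}_h\in\mathbb{OCT}_n$ be a non-empty rational octagonal shape represented by the strongly closed octagonal graph $G_h=(\mathcal{N},w_h)$, and let $R_h$ be a subgraph of $G_h$ such that $\mathrm{S\text{-}closure}(R_h)=G_h$. Let $G_1\sqcup G_2=(\mathcal{N},w)$. Then $\mathrm{oct}_1\uplus\mathrm{oct}_2\neq\mathrm{oct}_1\cup\mathrm{oct}_2$ if and only if there exist an arc $(i,j)$ of $R_1$ and an arc $(k,\ell)$ of $R_2$ such that (1a) $w_1(i,j)<w_2(i,j)$; (1b) $w_2(k,\ell)<w_1(k,\ell)$; (2a) $w_1(i,j)+w_2(k,\ell)<w(i,\ell)+w(k,j)$; (2b) $w_1(i,j)+w_2(k,\ell)<w(i,\bar k)+w(\bar\jmath,\ell)$; (3a) $2w_1(i,j)+w_2(k,\ell)<w(i,\ell)+w(i,\bar k)+w(\bar\jmath,j)$; (3b) $2w_1(i,j)+w_2(k,\ell)<w(k,j)+w(\bar\jmath,\ell)+w(i,\bar\imath)$; (4a) $w_1(i,j)+2w_2(k,\ell)<w(i,\ell)+w(\bar\jmath,\ell)+w(k,\bar k)$; (4b) $w_1(i,j)+2w_2(k,\ell)<w(k,j)+w(i,\bar k)+w(\bar\ell,\ell)$.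
   Context: Let $\mathcal{N}=\{0,\dots,2n-1\}$; node $2s$ stands for $+x_{s+1}$ and node $2s+1$ for $-x_{s+1}$. For $i\in\mathcal{N}$, $\bar\imath=i+1$ if $i$ is even and $\bar\imath=i-1$ if $i$ is odd. For $\mathbf{v}\in\mathbb{R}^n$ let $\tilde\pi_{2s}(\mathbf{v})=v_{s+1}$ and $\tilde\pi_{2s+1}(\mathbf{v})=-v_{s+1}$. A graph is $(\mathcal{N},w)$ with $w:\mathcal{N}\times\mathcal{N}\to\mathbb{Q}\cup\{+\infty\}$ ($d<+\infty$, $d+(+\infty)=+\infty$); $(i,j)$ is an arc if $w(i,j)<+\infty$; it is consistent if no cycle has negative total weight; $G\unlhd G'$ iff $w\le w'$ pointwise. An octagonal graph is a consistent graph with $w(i,j)=w(\bar\jmath,\bar\imath)$ for all $i,j$. It is closed if $w(i,i)=0$ and $w(i,j)\le w(i,k)+w(k,j)$ for all $i,j,k$, and strongly closed if moreover $2w(i,j)\le w(i,\bar\imath)+w(\bar\jmath,j)$ for all $i,j$. $\mathrm{S\text{-}closure}(G)$ is the pointwise maximum of all strongly closed octagonal graphs $G'\unlhd G$. $R$ is a subgraph of $G$ if every arc of $R$ is an arc of $G$ with the same weight. A (rational) octagonal shape is a subset of $\mathbb{R}^n$ defined by finitely many constraints $\pm x_i\le b$, $\pm x_i\pm x_j\le b$ with $b\in\mathbb{Q}$; $\mathbb{OCT}_n$ is the set of them. An octagonal graph $G$ represents $\{\mathbf{x}\in\mathbb{R}^n : \tilde\pi_i(\mathbf{x})-\tilde\pi_j(\mathbf{x})\le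 w(i,j)\ \forall i,j\in\mathcal{N}\}$. $G_1\sqcup G_2=(\mathcal{N},\max(w_1,w_2))$ pointwise. $\mathrm{oct}_1\uplus\mathrm{oct}_2$ is the least octagonal shape containing $\mathrm{oct}_1\cup\mathrm{oct}_2$, represented by $G_1\sqcup G_2$. *)

(* Defs.v *)
From mathcomp Require Import all_boot all_order all_algebra.
From mathcomp Require Import reals.
Set Implicit Arguments. Unset Strict Implicit. Unset Printing Implicit Defensive.
Import Order.TTheory GRing.Theory Num.Theory.
Local Open Scope ring_scope.

(** Weights: Q ∪ {+oo}; [None] is +oo. *)
Definition wt := option rat.
Definition wadd (a b : wt) : wt :=
  match a, b with Some x, Some y => Some (x + y) | _, _ => None end.
Definition wle (a b : wt) : bool :=
  match a, b with
  | _, None => true | None, Some _ => false | Some x, Some y => (x <= y) end.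
Definition wlt (a b : wt) : bool :=
  match a, b with
  | None, _ => false | Some _, None => true | Some x, Some y => (x < y) end.
Definition wmax (a b : wt) : wt := if wle a b then b else a.

(** Nodes N = {0, ..., 2n-1}: node 2s is +x_{s+1}, node 2s+1 is -x_{s+1}. *)
Definition node (n : nat) := 'I_(2 * n).

Lemma bar_proof n (i : node n) : ((if odd i then i.-1 else i.+1) < 2 * n)%N.
Proof.
case: ifP => Hi; first exact: leq_ltn_trans (leq_pred _) (ltn_ord i).
rewrite ltn_neqAle ltn_ord andbT; apply/eqP => E.
by move: (congr1 odd E); rewrite /= Hi oddM andFb.
Qed.

Definition bar n (i : node n) : node n := Ordinal (bar_proof i).

Lemma half_proof n (i : node n) : (i./2 < n)%N.
Proof. by rewrite ltn_half_double -mul2n ltn_ord. Qed.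

Definition var_of n (i : node n) : 'I_n := Ordinal (half_proof i).

Definition pit (R : realType) n (i : node n) (v : 'rV[R]_n) : R :=
  if odd i then - v ord0 (var_of i) else v ord0 (var_of i).

Definition graph n := node n -> node n -> wt.

Definition is_arc n (G : graph n) (i j : node n) : bool := G i j != None.

(** total weight of the closed walk s_0 -> s_1 -> ... -> s_k -> s_0 *)
Definition cycle_weight n (G : graph n) (s : seq (node n)) : wt :=
  foldr wadd (Some 0) [seq G p.1 p.2 | p <- zip s (rot 1 s)].

Definition consistent n (G : graph n) : Prop :=
  forall s : seq (node n), s != [::] ->
    ~ (exists d : rat, cycle_weight G s = Some d /\ d < 0).

Definition gle n (G G' : graph n) : Prop := forall i j, wle (G i j) (G' i j).

Definition octagonal n (G : graph n) : Prop :=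
  consistent G /\ forall i j, G i j = G (bar j) (bar i).

Definition closed n (G : graph n) : Prop :=
  (forall i, G i i = Some 0) /\
  (forall i j k, wle (G i j) (wadd (G i k) (G k j))).

Definition strongly_closed n (G : graph n) : Prop :=
  closed G /\
  forall i j, wle (wadd (G i j) (G i j)) (wadd (G i (bar i)) (G (bar j) j)).

(** [is_Sclosure G C] : C = S-closure(G), the pointwise maximum of all
    strongly closed octagonal graphs G' ⊴ G. *)
Definition is_Sclosure n (G C : graph n) : Prop :=
  forall i j,
    (exists G' : graph n, [/\ octagonal G', strongly_closed G', gle G' G
                            & G' i j = C i j]) /\
    (forall G' : graph n, octagonal G' -> strongly_closed G' -> gle G' G ->
        wle (G' i j) (C i j)).

Definition subgraph n (R G : graph n) : Prop :=
  forall i j, is_arc R i j -> R i j = G i j.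

Definition gamma (R : realType) n (G : graph n) : 'rV[R]_n -> Prop :=
  fun x => forall i j d, G i j = Some d -> pit i x - pit j x <= ratr d.

Arguments gamma R {n} G x.

(** Octagonal constraints  ±x_s <= b  and  ±x_s ±x_t <= b  (b rational);
    a boolean [true] sign means minus. *)
Inductive oct_constr (n : nat) :=
  | OUnary of bool & 'I_n & rat
  | OBinary of bool & 'I_n & bool & 'I_n & rat.

Definition sgn (R : realType) (b : bool) (r : R) : R := if b then - r else r.

Definition sat_constr (R : realType) n (c : oct_constr n) (x : 'rV[R]_n) : Prop :=
  match c with
  | OUnary b s d => sgn b (x ord0 s) <= ratr d
  | OBinary b s b' t d => sgn b (x ord0 s) + sgn b' (x ord0 t) <= ratr d
  end.

Definition is_oct (R : realType) n (O : 'rV[R]_n -> Prop) : Prop :=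
  exists cs : seq (oct_constr n),
    forall x, O x <-> foldr (fun c P => sat_constr c x /\ P) True cs.

(** oct1 ⊎ oct2 : the least octagonal shape containing oct1 ∪ oct2, taken
    as the intersection of all octagonal shapes containing the union
    (this coincides with the least such shape whenever it exists). *)
Definition oct_join (R : realType) n (O1 O2 : 'rV[R]_n -> Prop) : 'rV[R]_n -> Prop :=
  fun x => forall O, is_oct O -> (forall y, O1 y \/ O2 y -> O y) -> O x.

(* Main.v *)
Require Import Defs.
From mathcomp Require Import all_boot all_order all_algebra.
From mathcomp Require Import reals.
From mathcomp.algebra_tactics Require Import ring lra.
From mathcomp Require Import zify.
From Stdlib Require Import Classical.
Set Implicit Arguments. Unset Strict Implicit. Unset Printing Implicit Defensive.
Import Order.TTheory GRing.Theory Num.Theory.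
Local Open Scope ring_scope.

Definition wmin (a b : wt) : wt := if wle a b then a else b.

Ltac wcase := repeat match goal with x : wt |- _ => destruct x end.
Ltac wsimp := unfold wmin, wmax in *; cbn [wadd wle wlt] in *.
Ltac wsplit := repeat match goal with
  | |- context [if ?a <= ?b then _ else _] => case: (lerP a b) => ?
  end.
Ltac wfin := wsimp; wsplit; wsimp; try done; lra.
Ltac wsolve := intros; wcase; wfin.

Lemma addarc_core (xy xr ry xp qr rp qy qp : wt) c :
  wle (Some 0) (wadd qp (Some c)) ->
  wle xy (wadd xr ry) -> wle xp (wadd xr rp) -> wle qy (wadd qr ry) ->
  wle qp (wadd qr rp) ->
  wle (wmin xy (wadd (wadd xp (Some c)) qy))
      (wadd (wmin xr (wadd (wadd xp (Some c)) qr)) (wmin ry (wadd (wadd rp (Some c)) qy))).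
Proof. wsolve. Qed.


Ltac wfin2 := wsimp; wsplit; wsimp; try done; try lra; exfalso; lra.

Lemma addarc_diag (xp qx qp : wt) c :
  wle (Some 0) (wadd qp (Some c)) -> wle qp (wadd qx xp) ->
  wmin (Some 0) (wadd (wadd xp (Some c)) qx) = Some 0.
Proof. intros; wcase; wsimp; wsplit; wsimp; try done; try (exfalso; lra). Qed.

Lemma wmin_lel a b : wle (wmin a b) a.
Proof. wcase; wsimp; wsplit; wsimp; try done; lra. Qed.
Lemma wmin_ler a b : wle (wmin a b) b.
Proof. wcase; wsimp; wsplit; wsimp; try done; lra. Qed.
Lemma wle_trans a b c : wle a b -> wle b c -> wle a c.
Proof. wsolve. Qed.
Lemma wle_refl a : wle a a.
Proof. wsolve. Qed.
Lemma wadd0 a : wadd (wadd (Some 0) a) (Some 0) = a.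
Proof. by case: a => //= x; rewrite add0r addr0. Qed.

Lemma step2_core (qp qbq bpp : wt) c :
  wle (Some 0) (wadd qp (Some c)) -> wle (wadd qp qp) (wadd qbq bpp) ->
  wle (Some 0) (wadd (wmin qp (wadd (wadd bpp (Some c)) qbq)) (Some c)).
Proof. wsolve. Qed.

Lemma wadd_minl a b c : wadd (wmin a b) c = wmin (wadd a c) (wadd b c).
Proof. wcase; wsimp; wsplit; wsimp; try done; try (exfalso; lra); congr Some; lra. Qed.
Lemma wadd_minr a b c : wadd c (wmin a b) = wmin (wadd c a) (wadd c b).
Proof. wcase; wsimp; wsplit; wsimp; try done; try (exfalso; lra); congr Some; lra. Qed.
Lemma wle_min x a b : wle x (wmin a b) = wle x a && wle x b.
Proof.
apply/idP/andP => [h|[h1 h2]].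
  by split; apply: wle_trans h _; [apply: wmin_lel|apply: wmin_ler].
by rewrite /wmin; case: ifP.
Qed.

Ltac pickdestr := match goal with x : wt |- _ => lazymatch goal with |- context [x] => destruct x end end.
Ltac leaf := wsimp; try done; tryif once pickdestr then leaf else lra.
Ltac wdist := repeat (first [rewrite wadd_minl | rewrite wadd_minr]); rewrite ?wle_min; repeat (apply/andP; split).
Ltac pickany := match goal with x : wt |- _ => destruct x end.
Ltac leaf2 := wsimp; try done; first [ once pickdestr; leaf2 | lra | once pickany; leaf2 ].

Lemma sc_derive (x y : wt) a : wle (Some a) x -> wle (wadd x x) y -> wle (Some (a+a)) y.
Proof. wsolve. Qed.
Lemma sc_comb1 (x y z : wt) a : wle (Some a) (wadd x y) -> wle (wadd y y) z ->
  wle (Some (a+a)) (wadd (wadd x x) z).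
Proof. wsolve. Qed.
Lemma sc_comb2 (x y z : wt) a : wle (Some a) (wadd y x) -> wle (wadd y y) z ->
  wle (Some (a+a)) (wadd (wadd x x) z).
Proof. wsolve. Qed.
Lemma wmin_cases a b : wmin a b = a \/ wmin a b = b.
Proof. rewrite /wmin; case: ifP; by [left|right]. Qed.

Lemma wmax_tri a1 b1 c1 a2 b2 c2 : wle a1 (wadd b1 c1) -> wle a2 (wadd b2 c2) ->
  wle (wmax a1 a2) (wadd (wmax b1 b2) (wmax c1 c2)).
Proof. wsolve. Qed.
Lemma wmax_sc a1 b1 c1 a2 b2 c2 : wle (wadd a1 a1) (wadd b1 c1) -> wle (wadd a2 a2) (wadd b2 c2) ->
  wle (wadd (wmax a1 a2) (wmax a1 a2)) (wadd (wmax b1 b2) (wmax c1 c2)).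
Proof. wsolve. Qed.
Lemma wmax_lel a b : wle a (wmax a b).
Proof. wsolve. Qed.
Lemma wmax_ler a b : wle b (wmax a b).
Proof. wsolve. Qed.
Lemma wmax_le a b r : wle a (Some r) -> wle b (Some r) -> wle (wmax a b) (Some r).
Proof. wsolve. Qed.
Lemma wgap a X : wlt (Some a) X ->
  exists2 d, 0 < d & forall d', d' <= d -> wle (Some (a + d')) X.
Proof.
case: X => [x|] /= h; last by exists 1 => //.
exists (x - a); first lra. move=> d' hd; rewrite /=; lra.
Qed.
Lemma wle_eq a b X : a = b -> wle (Some a) X -> wle (Some b) X.
Proof. by move=> ->. Qed.
Lemma wlt_le_trans a X Y : wlt (Some a) X -> wle X Y -> wlt (Some a) Y.
Proof. wsolve. Qed.
Lemma wle_shift a X : wle (Some a) X -> wle (Some 0) (wadd X (Some (- a))).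
Proof. wsolve. Qed.


Section Basic.
Variable n : nat.
Implicit Types (G : graph n) (p q : node n).

Lemma val_bar (i : node n) : val (bar i) = if odd i then i.-1 else i.+1.
Proof. by []. Qed.

Lemma odd_bar (i : node n) : odd (bar i) = ~~ odd i.
Proof.
rewrite val_bar; case: (nat_of_ord i) => [|m] //=.
by case Hm: (odd m); rewrite /= ?Hm.
Qed.

Lemma bar_bar (i : node n) : bar (bar i) = i.
Proof.
apply: val_inj => /=.
case: (nat_of_ord i) => [|m] //=.
by case Hm: (odd m); rewrite /= ?Hm.
Qed.

Lemma half_bar (i : node n) : (bar i)./2 = i./2.
Proof.
rewrite val_bar; case: (nat_of_ord i) => [|m] //=.
by case Hm: (odd m) => /=; rewrite uphalf_half Hm.
Qed.

Lemma var_bar (i : node n) : var_of (bar i) = var_of i.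
Proof. by apply: val_inj; rewrite /= half_bar. Qed.

Lemma pit_bar (R : realType) (i : node n) (x : 'rV[R]_n) : pit (bar i) x = - pit i x.
Proof. by rewrite /pit odd_bar var_bar; case: (odd i); rewrite ?opprK. Qed.

End Basic.

Section Arc.
Variable n : nat.
Implicit Types (G : graph n) (p q : node n).

Definition addarc G p q (c : rat) : graph n :=
  fun x y => wmin (G x y) (wadd (wadd (G x p) (Some c)) (G q y)).

Lemma addarc_closed G p q c : Defs.closed G -> wle (Some 0) (wadd (G q p) (Some c)) ->
  Defs.closed (addarc G p q c).
Proof.
move=> [G0 Gt] Hc; split.
  by move=> x; rewrite /addarc G0; apply: addarc_diag Hc (Gt _ _ _).
move=> x y r; rewrite /addarc; exact: (addarc_core Hc (Gt x y r) (Gt x p r) (Gt q y r) (Gt q p r)).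
Qed.

Lemma addarc_le G p q c : gle (addarc G p q c) G.
Proof. by move=> x y; apply: wmin_lel. Qed.

Lemma addarc_arc G p q c : Defs.closed G -> wle (addarc G p q c p q) (Some c).
Proof.
move=> [G0 _]; apply: wle_trans (wmin_ler _ _) _.
by rewrite !G0 wadd0 wle_refl.
Qed.

Lemma gle_trans (A B C : graph n) : gle A B -> gle B C -> gle A C.
Proof. by move=> h1 h2 x y; apply: wle_trans (h1 x y) (h2 x y). Qed.

End Arc.

Lemma fmin_le (s : seq rat) x : x \in s -> foldr Order.min 0 s <= x.
Proof.
elim: s => //= a s IH; rewrite in_cons => /orP [/eqP -> | /IH h].
  by rewrite ge_min lexx.
by rewrite ge_min h orbT.
Qed.

Lemma fmin_mem (s : seq rat) : foldr Order.min 0 s \in 0 :: s.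
Proof.
elim: s => [|a s IH] /=; first by rewrite mem_seq1.
rewrite /Order.min; case: ifP => _; first by rewrite !in_cons eqxx orbT.
move: IH; rewrite !in_cons => /orP [->//|->]; by rewrite !orbT.
Qed.

Section Pot.
Variable n : nat.
Implicit Types (G : graph n) (p q : node n).

Lemma wle_some_inv a b d : wle a (Some d) -> wle (Some d) b -> exists2 e, a = Some e & e <= d.
Proof. case: a => //= e h _; by exists e. Qed.

Lemma closed_pot G : Defs.closed G ->
  exists y : node n -> rat, forall p q d, G p q = Some d -> y p - y q <= d.
Proof.
move=> [G0 Gt].
pose f v u := odflt 0 (G u v).
pose s v := map (f v) (enum 'I_(2 * n)).
pose d v := foldr Order.min 0 (s v).
have fs v u : f v u \in s v by apply: map_f; rewrite mem_enum.
exists (fun v => - d v) => p q e Hpq.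
have key : d q <= d p + e.
  have [h0 | hu] : d p = 0 \/ exists u, d p = f p u.
    have := fmin_mem (s p); rewrite in_cons => /orP [/eqP h|/mapP [u _ h]].
      by left. by right; exists u.
    rewrite h0 add0r; have := fmin_le (fs q p); by rewrite /f Hpq.
  case: hu => u Hu.
  case Eup: (G u p) => [a|]; last first.
    have := fmin_le (fs q p); rewrite /f Hpq /= => h.
    by rewrite Hu /f Eup /= add0r.
  have := Gt u q p; rewrite Eup Hpq /=.
  case Euq: (G u q) => [b|] //= hb.
  have := fmin_le (fs q u); rewrite /f Euq /= => h.
  rewrite Hu /f Eup /=; exact: le_trans h hb.
lra.
Qed.
End Pot.

Section Point.
Variable n : nat.
Implicit Types (G : graph n) (p q : node n).

Lemma closed_point G : Defs.closed G ->
  exists z : node n -> rat, (forall v, z (bar v) = - z v) /\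
    forall p q d, wle (G p q) (Some d) -> wle (G (bar q) (bar p)) (Some d) -> z p - z q <= d.
Proof.
move=> /closed_pot [y Hy].
exists (fun v => (y v - y (bar v)) / 2); split.
  by move=> v; rewrite bar_bar; lra.
move=> p q d h1 h2.
case E1: (G p q) h1 => [d1|] //= h1.
case E2: (G (bar q) (bar p)) h2 => [d2|] //= h2.
have := Hy _ _ _ E1; have := Hy _ _ _ E2; lra.
Qed.

Lemma ev_proof (s : 'I_n) : (2 * s < 2 * n)%N.
Proof. by rewrite ltn_pmul2l. Qed.
Definition ev (s : 'I_n) : node n := Ordinal (ev_proof s).

Definition mkvec (R : realType) (z : node n -> rat) : 'rV[R]_n :=
  \row_(s < n) ratr (z (ev s)).

Lemma pit_mkvec (R : realType) (z : node n -> rat) p :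
  (forall v, z (bar v) = - z v) -> pit p (mkvec R z) = ratr (z p).
Proof.
move=> Hz; rewrite /pit /mkvec mxE.
case Hp: (odd p).
  have -> : ev (var_of p) = bar p.
    apply: val_inj => /=; rewrite Hp.
    by rewrite -{2}[nat_of_ord p]odd_double_half Hp add1n /= -muln2 mulnC.
  by rewrite Hz rmorphN opprK.
have -> : ev (var_of p) = p.
  apply: val_inj => /=.
  by rewrite -{2}[nat_of_ord p]odd_double_half Hp add0n -muln2 mulnC.
by [].
Qed.

End Point.

Section PhaseA.
Variable n : nat.
Implicit Types (G : graph n) (p q : node n).

Definition gsym G := forall i j, G i j = G (bar j) (bar i).
Definition gsc G := forall i j, wle (wadd (G i j) (G i j)) (wadd (G i (bar i)) (G (bar j) j)).

Definition addpair G p q c := addarc (addarc G p q c) (bar q) (bar p) c.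

Lemma addpair_closed G p q c : Defs.closed G -> gsym G -> gsc G ->
  wle (Some 0) (wadd (G q p) (Some c)) -> Defs.closed (addpair G p q c).
Proof.
move=> Gc Gs Gsc Hc; apply: addarc_closed; first exact: addarc_closed.
rewrite /addarc -(Gs q p).
exact: step2_core Hc (Gsc q p).
Qed.

Lemma addpair_le G p q c : gle (addpair G p q c) G.
Proof. apply: gle_trans (addarc_le _ _ _ _) (addarc_le _ _ _ _). Qed.

Lemma addpair_arc G p q c : Defs.closed G -> gsym G -> gsc G ->
  wle (Some 0) (wadd (G q p) (Some c)) ->
  wle (addpair G p q c p q) (Some c) /\ wle (addpair G p q c (bar q) (bar p)) (Some c).
Proof.
move=> Gc Gs Gsc Hc; split.
  apply: wle_trans (addarc_le _ _ _ _ _ _) _; exact: addarc_arc.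
apply: addarc_arc; exact: addarc_closed.
Qed.

Lemma point_below G (H : graph n) : Defs.closed H -> gsym G -> gle H G ->
  exists z : node n -> rat, (forall v, z (bar v) = - z v) /\
    (forall a b d, G a b = Some d -> z a - z b <= d) /\
    (forall a b d, wle (H a b) (Some d) -> wle (H (bar b) (bar a)) (Some d) -> z a - z b <= d).
Proof.
move=> /closed_point [z [Hz1 Hz2]] Gs HG; exists z; split => //; split => // a b d E.
apply: Hz2.
  by apply: wle_trans (HG a b) _; rewrite E /= lexx.
by apply: wle_trans (HG _ _) _; rewrite -Gs E /= lexx.
Qed.

Lemma tight G p q c : Defs.closed G -> gsym G -> gsc G ->
  wle (Some 0) (wadd (G q p) (Some c)) ->
  exists z : node n -> rat, (forall v, z (bar v) = - z v) /\
    (forall a b d, G a b = Some d -> z a - z b <= d) /\ z p - z q <= c.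
Proof.
move=> Gc Gs Gsc Hc.
have [z [Hz1 [Hz2 Hz3]]] := point_below (addpair_closed Gc Gs Gsc Hc) Gs (@addpair_le G p q c).
exists z; split => //; split => //.
have [h1 h2] := addpair_arc Gc Gs Gsc Hc.
by apply: Hz3; rewrite ?bar_bar.
Qed.
End PhaseA.


Lemma phaseB n (W : graph n) (i j k l : node n) (u v e : rat) :
  gsym W -> gsc W ->
  wle (Some (u+e)) (W i j) ->
  wle (Some (v+e)) (W k l) ->
  wle (Some (u+v+2*e)) (wadd (W i l) (W k j)) ->
  wle (Some (u+v+2*e)) (wadd (W i (bar k)) (W (bar j) l)) ->
  wle (Some (2*u+v+3*e)) (wadd (wadd (W i l) (W i (bar k))) (W (bar j) j)) ->
  wle (Some (2*u+v+3*e)) (wadd (wadd (W k j) (W (bar j) l)) (W i (bar i))) ->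
  wle (Some (u+2*v+3*e)) (wadd (wadd (W i l) (W (bar j) l)) (W k (bar k))) ->
  wle (Some (u+2*v+3*e)) (wadd (wadd (W k j) (W i (bar k))) (W (bar l) l)) ->
  wle (Some 0) (wadd (addpair W j i (-(u+e)) k l) (Some (-(v+e)))) /\
  wle (Some 0) (wadd (addarc (addpair W j i (-(u+e))) l k (-(v+e)) (bar l) (bar k)) (Some (-(v+e)))).
Proof.
move=> Ws Wsc h1a h1b h2a h2b h3a h3b h4a h4b.
have s1 := Wsc i j; have s2 := Wsc k l; have s3 := Wsc i (bar k).
have s4 := Wsc (bar j) l; have s5 := Wsc i l; have s6 := Wsc k j.
rewrite !bar_bar in s3 s4.
have t1 := sc_derive h1a s1; have t2 := sc_derive h1b s2.
have d1 := sc_comb1 h2b s4; have d2 := sc_comb2 h2a s5.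
have d3 := sc_comb1 h2a s6; have d4 := sc_comb2 h2b s3.
rewrite /addpair /addarc.
rewrite ?(Ws (bar l) (bar k)) ?(Ws (bar l) j) ?(Ws (bar l) (bar i)) ?(Ws (bar j) (bar k)) ?(Ws k (bar i)) !bar_bar.
move: h1a h1b h2a h2b h3a h3b h4a h4b s1 s2 s3 s4 s5 s6 t1 t2 d1 d2 d3 d4.
move: (W i j) (W k l) (W i l) (W k j) (W i (bar k)) (W (bar j) l) (W (bar j) j) (W i (bar i)) (W k (bar k)) (W (bar l) l).
clear Ws Wsc.
intros; split; wdist.
all: leaf.
Qed.


Section Real.
Variable R : realType.
Variable n : nat.
Implicit Types (G : graph n) (p q : node n) (x : 'rV[R]_n).

Lemma addarc_real G p q c x : gamma R G x -> pit p x - pit q x <= ratr c ->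
  gamma R (addarc G p q c) x.
Proof.
move=> Hg Hc a b d; rewrite /addarc.
case: (wmin_cases (G a b) (wadd (wadd (G a p) (Some c)) (G q b))) => ->.
  exact: Hg.
case E1: (G a p) => [d1|] //=; case E2: (G q b) => [d2|] //= [<-].
have h1 := Hg _ _ _ E1; have h2 := Hg _ _ _ E2.
rewrite !rmorphD /=; lra.
Qed.

Lemma real_step G p q c x : gamma R G x -> pit p x - pit q x <= ratr c ->
  wle (Some 0) (wadd (G q p) (Some c)).
Proof.
move=> Hg Hc; case E: (G q p) => [f|] //=.
have h := Hg _ _ _ E.
rewrite -(ler_rat R) rmorphD rmorph0 /=; lra.
Qed.

Definition addall G (L : seq (node n * node n * rat)) : graph n :=
  foldr (fun a H => addarc H a.1.1 a.1.2 a.2) G L.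

Lemma addall_ok G L x : Defs.closed G -> gamma R G x ->
  (forall a, a \in L -> pit a.1.1 x - pit a.1.2 x <= ratr a.2) ->
  [/\ Defs.closed (addall G L), gamma R (addall G L) x, gle (addall G L) G &
      forall a, a \in L -> wle (addall G L a.1.1 a.1.2) (Some a.2)].
Proof.
move=> Gc Gx; elim: L => [|a L IH] HL.
  by split => // ? ?; apply: wle_refl.
have HL' : forall b, b \in L -> pit b.1.1 x - pit b.1.2 x <= ratr b.2.
  by move=> b hb; apply: HL; rewrite in_cons hb orbT.
have Ha : pit a.1.1 x - pit a.1.2 x <= ratr a.2 by apply: HL; rewrite in_cons eqxx.
have [Fc Fx Fle Farc] := IH HL'.
rewrite /=; split.
- by apply: addarc_closed => //; apply: real_step Fx Ha.
- exact: addarc_real.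
- exact: gle_trans (addarc_le _ _ _ _) Fle.
- move=> b; rewrite in_cons => /orP [/eqP ->|hb].
    exact: addarc_arc.
  exact: wle_trans (addarc_le _ _ _ _ _ _) (Farc _ hb).
Qed.

Definition idg : graph n := fun p q => if p == q then Some 0 else None.

Lemma idg_closed : Defs.closed idg.
Proof.
split; first by move=> i; rewrite /idg eqxx.
move=> i j k; rewrite /idg.
case: (eqVneq i k) => [<-|ik] /=; last by case: (i == j).
by case: (i == j) => //=; rewrite addr0.
Qed.

Lemma idg_gamma x : gamma R idg x.
Proof. move=> i j d; rewrite /idg; case: eqP => // -> [<-]; by rewrite subrr rmorph0. Qed.

End Real.

Section Pgraph.
Variable n : nat.

Definition pgraph (z : node n -> rat) : graph n := fun p q => Some (z p - z q).

Lemma foldr_wadd_some (T : Type) (t : seq T) (f : T -> rat) :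
  foldr wadd (Some 0) [seq Some (f p) | p <- t] = Some (\sum_(p <- t) f p).
Proof. elim: t => [|a t IH] /=; first by rewrite big_nil. by rewrite IH big_cons. Qed.

Lemma pgraph_cycle z s : cycle_weight (pgraph z) s = Some 0.
Proof.
rewrite /cycle_weight /pgraph foldr_wadd_some; congr Some.
rewrite big_split /=.
rewrite -(big_map (fun p => p.1) predT z) -(big_map (fun p => p.2) predT (fun x => - z x)).
have h1 : [seq p.1 | p <- zip s (rot 1 s)] = s by apply: unzip1_zip; rewrite size_rot.
have h2 : [seq p.2 | p <- zip s (rot 1 s)] = rot 1 s by apply: unzip2_zip; rewrite size_rot.
have hp : perm_eq (rot 1 s) s by rewrite perm_rot perm_refl.
rewrite h1 h2 (perm_big _ hp) sumrN; lra.
Qed.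

Lemma pgraph_props z : (forall v, z (bar v) = - z v) ->
  octagonal (pgraph z) /\ strongly_closed (pgraph z).
Proof.
move=> Hz; split; first split.
- move=> s _ [d [Hd Hn]]; move: Hd; rewrite pgraph_cycle => -[Hd]; rewrite -Hd in Hn.
  by rewrite ltxx in Hn.
- by move=> i j; rewrite /pgraph !Hz; congr Some; lra.
- split; first split.
  + by move=> i; rewrite /pgraph subrr.
  + move=> i j k; rewrite /pgraph /=; lra.
  + move=> i j; rewrite /pgraph /= !Hz; lra.
Qed.
End Pgraph.

Section Sem.
Variable R : realType.
Variable n : nat.

Lemma sclos_sem (R1 G1 : graph n) (x : 'rV[R]_n) :
  is_Sclosure R1 G1 -> gamma R R1 x -> gamma R G1 x.
Proof.
move=> HS Hx a b d E.
rewrite leNgt; apply/negP => Hlt.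
have [q] := rat_in_itvoo Hlt; rewrite in_itv /= => /andP [hq1 hq2].
rewrite ltr_rat in hq1.
pose L1 := pmap (fun pq : node n * node n => omap (fun e => (pq.1, pq.2, e)) (R1 pq.1 pq.2))
             (enum (@predT (node n * node n))).
pose L2 := map (fun a : node n * node n * rat => (bar a.1.2, bar a.1.1, a.2)) L1.
pose L3 := [:: (b, a, -q); (bar a, bar b, -q)].
have L1E : forall a', a' \in L1 -> R1 a'.1.1 a'.1.2 = Some a'.2.
  move=> a'; rewrite mem_pmap => /mapP [[p1 p2] _].
  by case E1: (R1 p1 p2) => [e|] //= [->].
have L1I : forall p1 p2 e, R1 p1 p2 = Some e -> (p1, p2, e) \in L1.
  move=> p1 p2 e E1; rewrite mem_pmap; apply/mapP; exists (p1, p2).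
    by rewrite mem_enum.
  by rewrite /= E1.
have Hsat : forall a', a' \in L1 ++ L2 ++ L3 -> pit a'.1.1 x - pit a'.1.2 x <= ratr a'.2.
  move=> a'; rewrite !mem_cat => /or3P [h|h|h].
  - exact: Hx (L1E _ h).
  - move/mapP: h => [a'' h ->] /=; rewrite !pit_bar.
    have := Hx _ _ _ (L1E _ h); lra.
  - move: h; rewrite !in_cons in_nil orbF => /orP [/eqP ->|/eqP ->] /=;
      rewrite ?pit_bar rmorphN /=; lra.
have [Fc _ _ Farc] := addall_ok (L:=L1 ++ L2 ++ L3) (idg_closed n) (idg_gamma x) Hsat.
have [z [Hz1 Hz2]] := closed_point Fc.
have [Goct Gsc] := pgraph_props Hz1.
have Gle : gle (pgraph z) R1.
  move=> p1 p2; case E1: (R1 p1 p2) => [e|] //=; apply: Hz2.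
    by apply: (Farc (p1, p2, e)); rewrite !mem_cat L1I.
  apply: (Farc (bar p2, bar p1, e)); rewrite !mem_cat; apply/or3P; apply: Or32.
  by apply/mapP; exists (p1, p2, e) => //; apply: L1I.
have := (HS a b).2 _ Goct Gsc Gle; rewrite /pgraph E /= => h1.
have h2 : z b - z a <= - q.
  apply: Hz2; first by apply: (Farc (b, a, -q)); rewrite !mem_cat !in_cons eqxx !orbT.
  by apply: (Farc (bar a, bar b, -q)); rewrite !mem_cat !in_cons eqxx !orbT.
clear -h1 h2 hq1; lra.
Qed.
End Sem.


Section Hull.
Variable R : realType.
Variable n : nat.
Implicit Types (G : graph n) (p q : node n) (x : 'rV[R]_n).

Lemma sat_binary p q d x :
  sat_constr (OBinary (odd p) (var_of p) (~~ odd q) (var_of q) d) x <-> pit p x - pit q x <= ratr d.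
Proof. rewrite /sat_constr /sgn /pit; case: (odd p); case: (odd q) => /=; split; lra. Qed.

Lemma mk_proof (b : bool) (s : 'I_n) : (2 * s + b < 2 * n)%N.
Proof.
have := ltn_ord s; case: b => /= h; lia.
Qed.
Definition mk (b : bool) (s : 'I_n) : node n := Ordinal (mk_proof b s).

Lemma pit_mk b s x : pit (mk b s) x = sgn b (x ord0 s).
Proof.
have ho : odd (mk b s) = b by case: b; rewrite /= ?addn1 ?addn0 /= mul2n odd_double.
have hv : var_of (mk b s) = s.
  by apply: val_inj => /=; rewrite addnC mul2n half_bit_double.
by rewrite /pit ho hv /sgn.
Qed.

Lemma constr_pair (c : oct_constr n) : exists p q r, forall x,
  sat_constr c x <-> pit p x - pit q x <= ratr r.
Proof.
case: c => [b s d|b s b' t d].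
  exists (mk b s), (bar (mk b s)), (2 * d) => x.
  rewrite pit_bar pit_mk /= rmorphM /= rmorph_nat; split; lra.
exists (mk b s), (mk (~~ b') t), d => x.
rewrite !pit_mk /=; rewrite /sgn; case: b'; case: b => /=; split; lra.
Qed.

Lemma foldr_In (cs : seq (oct_constr n)) x :
  foldr (fun c P => sat_constr c x /\ P) True cs <-> (forall c, List.In c cs -> sat_constr c x).
Proof.
elim: cs => [|c cs IH] /=; first by split.
split; first by move=> [h1 /IH h2] c' [<-|h]; [exact: h1|exact: h2].
move=> h; split; first by apply: h; left.
by apply/IH => c' h'; apply: h; right.
Qed.

Lemma foldr_pmap (T : eqType) (s : seq T) (f : T -> option (oct_constr n)) x :
  foldr (fun c P => sat_constr c x /\ P) True (pmap f s) <->
  (forall t, t \in s -> forall c, f t = Some c -> sat_constr c x).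
Proof.
elim: s => [|a s IH] /=; first by split.
case E: (f a) => [c|] /=.
  split.
    move=> [h1 /IH h2] t; rewrite in_cons => /orP [/eqP ->|ht] c'.
      by rewrite E => -[<-].
    exact: h2.
  move=> h; split; first by apply: (h a); rewrite ?in_cons ?eqxx.
  by apply/IH => t ht; apply: h; rewrite in_cons ht orbT.
split.
  move/IH=> h2 t; rewrite in_cons => /orP [/eqP ->|ht] c'; first by rewrite E.
  exact: h2.
by move=> h; apply/IH => t ht; apply: h; rewrite in_cons ht orbT.
Qed.

Lemma gamma_oct G : is_oct (gamma R G).
Proof.
exists (pmap (fun pq : node n * node n =>
   omap (fun d => OBinary (odd pq.1) (var_of pq.1) (~~ odd pq.2) (var_of pq.2) d) (G pq.1 pq.2))
   (enum (@predT (node n * node n)))) => x.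
rewrite foldr_pmap; split.
  move=> h [p q] _ c /=; case E: (G p q) => [d|] //= [<-]; apply/sat_binary; exact: h E.
move=> h p q d E; apply/sat_binary; apply: (h (p, q)); first by rewrite mem_enum.
by rewrite /= E.
Qed.

Lemma gamma_mkvec G z : (forall v, z (bar v) = - z v) ->
  (forall a b d, G a b = Some d -> z a - z b <= d) -> gamma R G (mkvec R z).
Proof.
move=> Hz h a b d E; rewrite !pit_mkvec // -rmorphB ler_rat; exact: h E.
Qed.

Lemma tight_bound G p q r : Defs.closed G -> gsym G -> gsc G ->
  (forall y : 'rV[R]_n, gamma R G y -> pit p y - pit q y <= ratr r) -> wle (G p q) (Some r).
Proof.
move=> Gc Gs Gsc H.
have key : forall c, wle (Some 0) (wadd (G p q) (Some c)) -> r < - c -> False.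
  move=> c hc hrc.
  have [z [Hz1 [Hz2 Hz3]]] := tight Gc Gs Gsc hc.
  have := H _ (gamma_mkvec Hz1 Hz2); rewrite !pit_mkvec // -rmorphB ler_rat => h.
  lra.
case E: (G p q) => [e|] /=.
  rewrite leNgt; apply/negP => her.
  apply: (key (- ((r + e) / 2))); rewrite ?E /=; lra.
exfalso; apply: (key (- (r + 1))); rewrite ?E //=; lra.
Qed.

End Hull.

Section Join.
Variable R : realType.
Variable n : nat.
Variables G1 G2 : graph n.

Definition wj : graph n := fun i j => wmax (G1 i j) (G2 i j).

Lemma wj_closed : Defs.closed G1 -> Defs.closed G2 -> Defs.closed wj.
Proof.
move=> [h1 t1] [h2 t2]; split; first by move=> i; rewrite /wj h1 h2.
move=> i j k; exact: wmax_tri.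
Qed.

Lemma wj_sym : gsym G1 -> gsym G2 -> gsym wj.
Proof. by move=> h1 h2 i j; rewrite /wj h1 h2. Qed.

Lemma wj_sc : gsc G1 -> gsc G2 -> gsc wj.
Proof. move=> h1 h2 i j; exact: wmax_sc. Qed.

Lemma gamma_le (G H : graph n) (x : 'rV[R]_n) : gle G H -> gamma R G x -> gamma R H x.
Proof.
move=> hle hg a b d E; have := hle a b; rewrite E.
case E': (G a b) => [d'|] //= hd; apply: le_trans (hg _ _ _ E') _; by rewrite ler_rat.
Qed.

Lemma hull_iff (x : 'rV[R]_n) : octagonal G1 -> strongly_closed G1 ->
  octagonal G2 -> strongly_closed G2 ->
  oct_join (gamma R G1) (gamma R G2) x <-> gamma R wj x.
Proof.
move=> [_ s1] [c1 sc1] [_ s2] [c2 sc2]; split.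
  move=> h; apply: h; first exact: gamma_oct.
  move=> y [hy|hy]; apply: gamma_le hy => a b; [exact: wmax_lel | exact: wmax_ler].
move=> hx O [cs Hcs] Hsub; apply/Hcs/foldr_In => c Hc.
have [p [q [r Hpqr]]] := constr_pair R c.
apply/Hpqr.
have bnd : forall G, Defs.closed G -> gsym G -> gsc G ->
    (forall y, gamma R G y -> O y) -> wle (G p q) (Some r).
  move=> G Gc Gs Gsc hO; apply: tight_bound => // y hy.
  apply/Hpqr; have := hO _ hy; move/Hcs/foldr_In; by apply.
have := wmax_le (bnd _ c1 s1 sc1 (fun y h => Hsub y (or_introl h)))
                (bnd _ c2 s2 sc2 (fun y h => Hsub y (or_intror h))).
rewrite -/(wj p q); case E: (wj p q) => [w0|] //= hw.
apply: le_trans (hx _ _ _ E) _; by rewrite ler_rat.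
Qed.

End Join.


Section Main.
Variable R : realType.
Variable n : nat.

Lemma viol (G : graph n) (x : 'rV[R]_n) : ~ gamma R G x ->
  exists i j d, G i j = Some d /\ ratr d < pit i x - pit j x.
Proof.
move=> hn; apply: NNPP => H; apply: hn => i j d E.
rewrite leNgt; apply/negP => lt; apply: H; by exists i, j, d.
Qed.

Lemma wlt_real (X : wt) (a : rat) (r : R) : ratr a < r ->
  (forall d, X = Some d -> r <= ratr d) -> wlt (Some a) X.
Proof.
case: X => [d|] //= h1 h2; have := h2 d erefl => h3.
by rewrite -(ltr_rat R); apply: lt_le_trans h1 h3.
Qed.

Lemma third (dl : rat) : 0 < dl ->
  0 < dl / 3 /\ dl / 3 <= dl /\ 2 * (dl / 3) <= dl /\ 3 * (dl / 3) <= dl.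
Proof. move=> h; split; [|split; [|split]]; lra. Qed.

Lemma bnd2 (X Y : wt) (rx ry : R) :
  (forall d, X = Some d -> rx <= ratr d) -> (forall d, Y = Some d -> ry <= ratr d) ->
  forall d, wadd X Y = Some d -> rx + ry <= ratr d.
Proof.
case: X => [a|] //; case: Y => [b|] //= h1 h2 d [<-].
rewrite rmorphD /=; have := h1 a erefl; have := h2 b erefl; lra.
Qed.

End Main.

Unset Implicit Arguments.
Theorem theorem8 (R : realType) (n : nat) (G1 G2 R1 R2 : graph n) :
  octagonal G1 -> strongly_closed G1 -> (exists x, gamma R G1 x) ->
  octagonal G2 -> strongly_closed G2 -> (exists x, gamma R G2 x) ->
  subgraph R1 G1 -> is_Sclosure R1 G1 ->
  subgraph R2 G2 -> is_Sclosure R2 G2 ->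
  let w1 := G1 in let w2 := G2 in
  let w := fun i j => wmax (G1 i j) (G2 i j) in
  (~ (forall x, oct_join (gamma R G1) (gamma R G2) x <->
                (gamma R G1 x \/ gamma R G2 x)))
  <->
  (exists i j k l : node n,
     is_arc R1 i j /\ is_arc R2 k l /\
      (* 1a *) wlt (w1 i j) (w2 i j) /\
      (* 1b *) wlt (w2 k l) (w1 k l) /\
      (* 2a *) wlt (wadd (w1 i j) (w2 k l)) (wadd (w i l) (w k j)) /\
      (* 2b *) wlt (wadd (w1 i j) (w2 k l)) (wadd (w i (bar k)) (w (bar j) l)) /\
      (* 3a *) wlt (wadd (wadd (w1 i j) (w1 i j)) (w2 k l))
                   (wadd (wadd (w i l) (w i (bar k))) (w (bar j) j)) /\
      (* 3b *) wlt (wadd (wadd (w1 i j) (w1 i j)) (w2 k l))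
                   (wadd (wadd (w k j) (w (bar j) l)) (w i (bar i))) /\
      (* 4a *) wlt (wadd (w1 i j) (wadd (w2 k l) (w2 k l)))
                   (wadd (wadd (w i l) (w (bar j) l)) (w k (bar k))) /\
      (* 4b *) wlt (wadd (w1 i j) (wadd (w2 k l) (w2 k l)))
                   (wadd (wadd (w k j) (w i (bar k))) (w (bar l) l))).
Proof.
move=> o1 s1 _ o2 s2 _ sub1 S1 sub2 S2 w1 w2 w.
rewrite /w1 /w2 /w -/(wj G1 G2); clear w1 w2 w.
have Hull x := hull_iff x o1 s1 o2 s2.
have le1 : gle G1 (wj G1 G2) by move=> a b; apply: wmax_lel.
have le2 : gle G2 (wj G1 G2) by move=> a b; apply: wmax_ler.
split.
- move=> Hn.
  have [x [hw [n1 n2]]] : exists x, gamma R (wj G1 G2) x /\ ~ gamma R G1 x /\ ~ gamma R G2 x.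
    apply: NNPP => Hno; apply: Hn => x; rewrite Hull; split.
      move=> hx; apply: NNPP => hu; apply: Hno; exists x; split => //.
      by split => h; apply: hu; [left|right].
    by move=> [h|h]; [apply: gamma_le le1 h | apply: gamma_le le2 h].
  have n1' : ~ gamma R R1 x by move=> h; apply: n1; apply: sclos_sem S1 h.
  have n2' : ~ gamma R R2 x by move=> h; apply: n2; apply: sclos_sem S2 h.
  have [i [j [u [Eij Vij]]]] := viol n1'.
  have [k [l [v [Ekl Vkl]]]] := viol n2'.
  have a1 : is_arc R1 i j by rewrite /is_arc Eij.
  have a2 : is_arc R2 k l by rewrite /is_arc Ekl.
  have G1ij : G1 i j = Some u by rewrite -(sub1 _ _ a1).
  have G2kl : G2 k l = Some v by rewrite -(sub2 _ _ a2).
  have hb : forall a b d, wj G1 G2 a b = Some d -> pit a x - pit b x <= ratr d.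
    by move=> a b d E; apply: hw E.
  exists i, j, k, l; split => //; split => //.
  rewrite G1ij G2kl /=.
  have pb := pit_bar.
  split.
    case E: (G2 i j) => [f|] //=.
    have := hb i j; rewrite /wj G1ij E /wmax /=.
    case: (lerP u f) => hf h; first by rewrite -(ltr_rat R); have := h f erefl; lra.
    have := h u erefl => hh; have : (ratr u < ratr u :> R) by lra.
    by rewrite ltxx.
  split.
    case E: (G1 k l) => [f|] //=.
    have := hb k l; rewrite /wj G2kl E /wmax /=.
    case: (lerP f v) => hf h.
      have := h v erefl => hh; have : (ratr v < ratr v :> R) by lra.
      by rewrite ltxx.
    by [].
  have r1 := Vij; have r2 := Vkl.
  split.
    apply: wlt_real (bnd2 (hb i l) (hb k j)); rewrite rmorphD /=; lra.
  split.
    apply: wlt_real (bnd2 (hb i (bar k)) (hb (bar j) l)); rewrite !pb rmorphD /=; lra.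
  split.
    apply: wlt_real (bnd2 (bnd2 (hb i l) (hb i (bar k))) (hb (bar j) j)); rewrite !pb !rmorphD /=; lra.
  split.
    apply: wlt_real (bnd2 (bnd2 (hb k j) (hb (bar j) l)) (hb i (bar i))); rewrite !pb !rmorphD /=; lra.
  split.
    apply: wlt_real (bnd2 (bnd2 (hb i l) (hb (bar j) l)) (hb k (bar k))); rewrite !pb !rmorphD /=; lra.
  apply: wlt_real (bnd2 (bnd2 (hb k j) (hb i (bar k))) (hb (bar l) l)); rewrite !pb !rmorphD /=; lra.
- move=> [i [j [k [l [a1 [a2 [c1a [c1b [c2a [c2b [c3a [c3b [c4a c4b]]]]]]]]]]]]].
  have G1ij : G1 i j = R1 i j by rewrite (sub1 _ _ a1).
  have G2kl : G2 k l = R2 k l by rewrite (sub2 _ _ a2).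
  move: a1 a2; rewrite /is_arc.
  case E1: (R1 i j) => [u|] // _; case E2: (R2 k l) => [v|] // _.
  rewrite E1 in G1ij; rewrite E2 in G2kl.
  move: c1a c1b c2a c2b c3a c3b c4a c4b; rewrite G1ij G2kl /= => c1a c1b c2a c2b c3a c3b c4a c4b.
  have c1a' := wlt_le_trans c1a (le2 i j).
  have c1b' := wlt_le_trans c1b (le1 k l).
  have [d1 d1p g1] := wgap c1a'.
  have [d2 d2p g2] := wgap c1b'.
  have [d3 d3p g3] := wgap c2a.
  have [d4 d4p g4] := wgap c2b.
  have [d5 d5p g5] := wgap c3a.
  have [d6 d6p g6] := wgap c3b.
  have [d7 d7p g7] := wgap c4a.
  have [d8 d8p g8] := wgap c4b.
  pose dl := Num.min d1 (Num.min d2 (Num.min d3 (Num.min d4 (Num.min d5 (Num.min d6 (Num.min d7 d8)))))).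
  have dlp : 0 < dl by rewrite /dl !lt_min d1p d2p d3p d4p d5p d6p d7p d8p.
  have dl1 : dl <= d1 by rewrite /dl !ge_min lexx.
  have dl2 : dl <= d2 by rewrite /dl !ge_min lexx !orbT.
  have dl3 : dl <= d3 by rewrite /dl !ge_min lexx !orbT.
  have dl4 : dl <= d4 by rewrite /dl !ge_min lexx !orbT.
  have dl5 : dl <= d5 by rewrite /dl !ge_min lexx !orbT.
  have dl6 : dl <= d6 by rewrite /dl !ge_min lexx !orbT.
  have dl7 : dl <= d7 by rewrite /dl !ge_min lexx !orbT.
  have dl8 : dl <= d8 by rewrite /dl !ge_min lexx !orbT.
  pose e := dl / 3.
  have [ep [he1 [he2 he3]]] := third dlp; rewrite -/e in ep he1 he2 he3.
  have h1a := g1 e (le_trans he1 dl1).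
  have h1b := g2 e (le_trans he1 dl2).
  have h2a := g3 (2 * e) (le_trans he2 dl3).
  have h2b := g4 (2 * e) (le_trans he2 dl4).
  have h3a := g5 (3 * e) (le_trans he3 dl5).
  have h3b := g6 (3 * e) (le_trans he3 dl6).
  have h4a := g7 (3 * e) (le_trans he3 dl7).
  have h4b := g8 (3 * e) (le_trans he3 dl8).
  have q3 : u + u + v + 3 * e = 2 * u + v + 3 * e by ring.
  have q4 : u + (v + v) + 3 * e = u + 2 * v + 3 * e by ring.
  rewrite q3 in h3a h3b; rewrite q4 in h4a h4b.
  have Wc := wj_closed s1.1 s2.1.
  have Ws := wj_sym o1.2 o2.2.
  have Wsc := wj_sc s1.2 s2.2.
  have [st3 st4] := phaseB Ws Wsc h1a h1b h2a h2b h3a h3b h4a h4b.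
  have hA := wle_shift h1a.
  have Ac := addpair_closed Wc Ws Wsc hA.
  have [Aji Abij] := addpair_arc Wc Ws Wsc hA.
  set A := addpair (wj G1 G2) j i (- (u + e)) in st3 st4 Ac Aji Abij.
  have Bc := addarc_closed Ac st3.
  have Blk := addarc_arc l k (- (v + e)) Ac.
  set B := addarc A l k (- (v + e)) in st4 Bc Blk.
  have Fc := addarc_closed Bc st4.
  have Fkl := addarc_arc (bar k) (bar l) (- (v + e)) Bc.
  set F := addarc B (bar k) (bar l) (- (v + e)) in Fc Fkl.
  have FB : gle F B by apply: addarc_le.
  have BA : gle B A by apply: addarc_le.
  have AW : gle A (wj G1 G2) by apply: addpair_le.
  have FW := gle_trans FB (gle_trans BA AW).
  have FA := gle_trans FB BA.
  have [z [Hz1 Hz2]] := closed_point Fc.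
  have zW : forall a b d, wj G1 G2 a b = Some d -> z a - z b <= d.
    move=> a b d E; apply: Hz2.
      by apply: wle_trans (FW a b) _; rewrite E /= lexx.
    by apply: wle_trans (FW _ _) _; rewrite -Ws E /= lexx.
  have zij : z j - z i <= - (u + e).
    apply: Hz2; first exact: wle_trans (FA j i) Aji.
    exact: wle_trans (FA _ _) Abij.
  have zkl : z l - z k <= - (v + e).
    apply: Hz2; first exact: wle_trans (FB l k) Blk.
    exact: Fkl.
  pose x := mkvec R z.
  have hx : gamma R (wj G1 G2) x by apply: gamma_mkvec.
  move=> Hall.
  have [] := (Hall x).1 ((Hull R x).2 hx) => h.
    have := h _ _ _ G1ij; rewrite !pit_mkvec // -rmorphB ler_rat; lra.
  have := h _ _ _ G2kl; rewrite !pit_mkvec // -rmorphB ler_rat; lra.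
Qed.
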